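(* Let $N>0$. (i) If $\tau\in(\tau_0^{(1)},\tau_1^{(1)})$, then $\beta_1^{**}(\tau)=\varphi_2^+(\beta_2^*(\tau))$, equivalently $\beta_2^*(\tau)=\varphi_1^+(\beta_1^{**}(\tau))$. In particular $$4(N+1)<\underline\beta_1(\tau)<\beta_1^{**}(\tau)<\overline\beta_1(\tau)\quad\text{and}\quad \underline\beta_2(\tau)<\beta_2^*(\tau)<\overline\beta_2(\tau).$$ (ii) If $\tau\in(\tau_0^{(2)},\tau_1^{(2)})$, then $\beta_2^{**}(\tau)=\varphi_1^+(\beta_1^*(\tau))$, equivalently $\beta_1^*(\tau)=\varphi_2^+(\beta_2^{**}(\tau))$. In particular $$4<\underline\beta_2(\tau)<\beta_2^{**}(\tau)<\overline\beta_2(\tau)\quad\text{and}\quad \underline\beta_1(\tau)<\beta_1^*(\tau)<\overline\beta_1(\tau).$$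
   Context: For $\tau\in(0,1)$, with $D=(N+1)^2+2\tau(N+1)+1$: $$\underline\beta_1(\tau)=\tfrac{2}{1-\tau^2}(N+1+\tau+\tau\sqrt D),\qquad \overline\beta_1(\tau)=\tfrac{2}{1-\tau^2}(N+1+\tau+\sqrt D),$$ $$\underline\beta_2(\tau)=\tfrac{2}{1-\tau^2}(1+\tau(N+1)+\tau\sqrt D),\qquad \overline\beta_2(\tau)=\tfrac{2}{1-\tau^2}(1+\tau(N+1)+\sqrt D);$$ $$\beta_1^*(\tau)=4(N+1)+8\tau,\quad \beta_2^*(\tau)=4+8\tau(N+1),\quad \beta_1^{**}(\tau)=8\tau(1+2\tau(N+1)),\quad \beta_2^{**}(\tau)=8\tau(N+1+2\tau);$$ $$\tau_0^{(1)}=\frac{N+1}{1+\sqrt{1+4(N+1)^2}},\qquad \tau_0^{(2)}=\frac{1}{N+1+\sqrt{(N+1)^2+4}};$$ $\tau_1^{(1)}$ is the unique positive zero of $2(1-2\tau^2)(1+2\tau(N+1))-1$ and $\tau_1^{(2)}$ the unique positive zero of $2(1-2\tau^2)(N+1+2\tau)-(N+1)$; $$\varphi_1^+(\beta_1)=2+\tau\beta_1+\sqrt{(2+\tau\beta_1)^2-\beta_1(\beta_1-4(N+1))}\ \ (0<\beta_1\le\overline\beta_1(\tau)),$$ $$\varphi_2^+(\beta_2)=2(N+1)+\tau\beta_2+\sqrt{(2(N+1)+\tau\beta_2)^2-\beta_2(\beta_2-4)}\ \ (0<\beta_2\le\overline\beta_2(\tau)).$$ *)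

(* Defs.v *)
From HB Require Import structures.
From mathcomp Require Import all_boot all_order all_algebra.
Set Implicit Arguments. Unset Strict Implicit. Unset Printing Implicit Defensive.
Import Order.TTheory GRing.Theory Num.Theory.
Local Open Scope ring_scope.

Section Defs.
Variable R : rcfType.
Variable N : nat.
Let M : R := (N.+1)%:R.

Definition Dd (t : R) : R := M ^+ 2 + 2 * t * M + 1.

Definition beta1_low (t : R) : R := 2 / (1 - t ^+ 2) * (M + t + t * Num.sqrt (Dd t)).
Definition beta1_up  (t : R) : R := 2 / (1 - t ^+ 2) * (M + t + Num.sqrt (Dd t)).
Definition beta2_low (t : R) : R := 2 / (1 - t ^+ 2) * (1 + t * M + t * Num.sqrt (Dd t)).
Definition beta2_up  (t : R) : R := 2 / (1 - t ^+ 2) * (1 + t * M + Num.sqrt (Dd t)).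

Definition beta1_s  (t : R) : R := 4 * M + 8 * t.
Definition beta2_s  (t : R) : R := 4 + 8 * t * M.
Definition beta1_ss (t : R) : R := 8 * t * (1 + 2 * t * M).
Definition beta2_ss (t : R) : R := 8 * t * (M + 2 * t).

Definition tau0_1 : R := M / (1 + Num.sqrt (1 + 4 * M ^+ 2)).
Definition tau0_2 : R := 1 / (M + Num.sqrt (M ^+ 2 + 4)).

(* polynomials whose unique positive zeros are tau_1^(1), tau_1^(2) *)
Definition g1 (t : R) : R := 2 * (1 - 2 * t ^+ 2) * (1 + 2 * t * M) - 1.
Definition g2 (t : R) : R := 2 * (1 - 2 * t ^+ 2) * (M + 2 * t) - M.

(* phi_1^+, phi_2^+ at parameter t (only used on their domains
   0 < beta <= beta_up t, which the theorem asserts explicitly). *)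
Definition phi1p (t b : R) : R :=
  2 + t * b + Num.sqrt ((2 + t * b) ^+ 2 - b * (b - 4 * M)).
Definition phi2p (t b : R) : R :=
  2 * M + t * b + Num.sqrt ((2 * M + t * b) ^+ 2 - b * (b - 4)).
End Defs.

(* Main.v *)
Require Import Defs.
From HB Require Import structures.
From mathcomp Require Import all_boot all_order all_algebra.
From mathcomp Require Import ring lra.
Import Order.TTheory GRing.Theory Num.Theory.
Local Open Scope ring_scope.

Lemma sqrt_id (R : rcfType) (a x : R) : 0 <= a -> x = a ^+ 2 -> Num.sqrt x = a.
Proof. by move=> ha ->; rewrite sqrtr_sqr ger0_norm. Qed.

Lemma lt_from (R : rcfType) (x y q : R) :
  0 <= x -> x ^+ 2 - y ^+ 2 = q -> 0 < q -> y < x.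
Proof. move=> hx hq h; rewrite -hq in h; nra. Qed.

Lemma ltdivl (R : rcfType) (d X y : R) : 0 < d -> (y < 2 / d * X) = (y * d < 2 * X).
Proof. by move=> hd; rewrite -mulrA (mulrC _ X) mulrA ltr_pdivlMr. Qed.

Lemma ltdivr (R : rcfType) (d X y : R) : 0 < d -> (2 / d * X < y) = (2 * X < y * d).
Proof. by move=> hd; rewrite -mulrA (mulrC _ X) mulrA ltr_pdivrMr. Qed.

Theorem mainTheorem16 (R : rcfType) (N : nat) (HN : (0 < N)%N)
    (t11 t12 : R)
    (Ht11 : 0 < t11) (Hg1 : g1 N t11 = 0)
    (Ht12 : 0 < t12) (Hg2 : g2 N t12 = 0) :
  (forall tau : R, @tau0_1 R N < tau < t11 ->
     [/\ (0 < beta2_s N tau <= beta2_up N tau)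
           /\ beta1_ss N tau = phi2p N tau (beta2_s N tau),
         (0 < beta1_ss N tau <= beta1_up N tau)
           /\ beta2_s N tau = phi1p N tau (beta1_ss N tau),
         4 * (N.+1)%:R < beta1_low N tau < beta1_ss N tau,
         beta1_ss N tau < beta1_up N tau &
         beta2_low N tau < beta2_s N tau < beta2_up N tau])
  /\
  (forall tau : R, @tau0_2 R N < tau < t12 ->
     [/\ (0 < beta1_s N tau <= beta1_up N tau)
           /\ beta2_ss N tau = phi1p N tau (beta1_s N tau),
         (0 < beta2_ss N tau <= beta2_up N tau)
           /\ beta1_s N tau = phi2p N tau (beta2_ss N tau),
         4 < beta2_low N tau < beta2_ss N tau,
         beta2_ss N tau < beta2_up N tau &
         beta1_low N tau < beta1_s N tau < beta1_up N tau]).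
Proof.
rewrite /tau0_1 /tau0_2 /beta1_low /beta1_up /beta2_low /beta2_up /beta1_s
  /beta2_s /beta1_ss /beta2_ss /phi1p /phi2p /Dd.
move: Hg1 Hg2; rewrite /g1 /g2.
set M := (N.+1)%:R => Hg1 Hg2.
have hM : 1 <= M by rewrite /M ler1n.
split => tau /andP [h0 h1].
- set s := Num.sqrt (1 + 4 * M ^+ 2).
  have hs : 0 <= s by apply: sqrtr_ge0.
  have hs2 : s ^+ 2 = 1 + 4 * M ^+ 2 by rewrite sqr_sqrtr //; nra.
  have hs1 : 0 < 1 + s by lra.
  move: h0; rewrite ltr_pdivrMr // -/s => h0.
  have ht : 0 < tau by nra.
  have hMt : 0 < tau * M by apply: mulr_gt0 => //; lra.
  have hsl : s - 1 < 4 * M * tau by nra.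
  have hP : 0 < 4 * M * tau ^+ 2 + 2 * tau - M by nra.
  have hG : 0 < 1 + 4 * tau * M - 4 * tau ^+ 2 - 8 * M * tau ^+ 3.
    have e : t11 * (1 + 4 * tau * M - 4 * tau ^+ 2 - 8 * M * tau ^+ 3) =
      (t11 - tau) + tau * (2 * (1 - 2 * t11 ^+ 2) * (1 + 2 * t11 * M) - 1)
      + 4 * tau * t11 * (t11 - tau) * (1 + 2 * M * (t11 + tau)) by ring.
    rewrite Hg1 mulr0 addr0 in e.
    have : 0 < t11 * (1 + 4 * tau * M - 4 * tau ^+ 2 - 8 * M * tau ^+ 3).
      rewrite e; apply: ltr_wpDr; last by lra.
      apply: mulr_ge0; last by nra.
      apply: mulr_ge0; last by lra.
      apply: mulr_ge0; lra.
    by rewrite pmulr_rgt0.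
  have hd : 0 < 1 - tau ^+ 2 by nra.
  set D := M ^+ 2 + 2 * tau * M + 1.
  set S := Num.sqrt D.
  have hS : 0 <= S by apply: sqrtr_ge0.
  have hS2 : S ^+ 2 = D by rewrite sqr_sqrtr // /D; nra.
  set P1 := 4 * M * tau ^+ 2 + 2 * tau - M in hP.
  set G1 := 1 + 4 * tau * M - 4 * tau ^+ 2 - 8 * M * tau ^+ 3 in hG.
  have A1 : 2 * M * (1 - tau ^+ 2) - M - tau < tau * S.
    apply: (@lt_from _ _ _ (P1 * M * (1 - tau ^+ 2))).
    - by apply: mulr_ge0; lra.
    - by rewrite [(tau * S) ^+ 2]exprMn hS2 /D /P1; ring.
    - by apply: mulr_gt0 => //; apply: mulr_gt0 => //; lra.
  have A2 : tau * S < tau * G1 + P1.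
    apply: (@lt_from _ _ _ (P1 * (1 - tau ^+ 2) * (P1 + 2 * tau * G1))).
    - by nra.
    - by rewrite [(tau * S) ^+ 2]exprMn hS2 /D /P1 /G1; ring.
    - by apply: mulr_gt0 => //; [apply: mulr_gt0 => // | nra].
  have A3 : tau * G1 + P1 < S.
    apply: (@lt_from _ _ _ (G1 ^+ 2 * (1 - tau ^+ 2))) => //.
    - by rewrite hS2 /D /P1 /G1; ring.
    - by apply: mulr_gt0 => //; nra.
  have A4 : tau * S < (1 + 3 * tau * M - 2 * tau ^+ 2 - 4 * tau ^+ 3 * M).
    apply: (@lt_from _ _ _ (G1 * (1 - tau ^+ 2) * (1 + 2 * tau * M))).
    - by move: hG hMt; rewrite /G1; lra.
    - by rewrite [(tau * S) ^+ 2]exprMn hS2 /D /P1 /G1; ring.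
    - by apply: mulr_gt0 => //; [apply: mulr_gt0 => // | nra].
  have A5 : (1 + 3 * tau * M - 2 * tau ^+ 2 - 4 * tau ^+ 3 * M) < S.
    apply: (@lt_from _ _ _ (P1 ^+ 2 * (1 - tau ^+ 2))) => //.
    - by rewrite hS2 /D /P1 /G1; ring.
    - by apply: mulr_gt0 => //; nra.
  have B5 : 4 + 8 * tau * M < 2 / (1 - tau ^+ 2) * (1 + tau * M + S).
    rewrite ltdivl //; move: A5; rewrite /G1; lra.
  have B3 : 8 * tau * (1 + 2 * tau * M) < 2 / (1 - tau ^+ 2) * (M + tau + S).
    rewrite ltdivl //; move: A3; rewrite /G1 /P1; lra.
  split.
  + split; first by apply/andP; split; [nra | exact: ltW].
    rewrite (@sqrt_id _ (2 * P1)); last by rewrite /P1; ring.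
      by rewrite /P1; ring.
    lra.
  + split; first by apply/andP; split; [nra | exact: ltW].
    rewrite (@sqrt_id _ (2 * G1)); last by rewrite /G1; ring.
      by rewrite /G1; ring.
    lra.
  + apply/andP; split.
      by rewrite ltdivl //; move: A1; lra.
    by rewrite ltdivr //; move: A2; rewrite /G1 /P1; lra.
  + exact: B3.
  + apply/andP; split => //.
    by rewrite ltdivr //; move: A4; rewrite /G1; lra.
- set s := Num.sqrt (M ^+ 2 + 4).
  have hs : 0 <= s by apply: sqrtr_ge0.
  have hs2 : s ^+ 2 = M ^+ 2 + 4 by rewrite sqr_sqrtr //; nra.
  have hs1 : 0 < M + s by lra.
  move: h0; rewrite ltr_pdivrMr // -/s => h0.
  have ht : 0 < tau by nra.
  have hMt : 0 < tau * M by apply: mulr_gt0 => //; lra.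
  have hsl : s - M < 4 * tau by nra.
  have hP : 0 < 4 * tau ^+ 2 + 2 * M * tau - 1 by nra.
  have hG : 0 < M + 4 * tau - 4 * M * tau ^+ 2 - 8 * tau ^+ 3.
    have e : t12 * (M + 4 * tau - 4 * M * tau ^+ 2 - 8 * tau ^+ 3) =
      (t12 - tau) * M + tau * (2 * (1 - 2 * t12 ^+ 2) * (M + 2 * t12) - M)
      + 4 * tau * t12 * (t12 - tau) * (M + 2 * (t12 + tau)) by ring.
    rewrite Hg2 mulr0 addr0 in e.
    have : 0 < t12 * (M + 4 * tau - 4 * M * tau ^+ 2 - 8 * tau ^+ 3).
      rewrite e; apply: ltr_wpDr; last by nra.
      apply: mulr_ge0; last by nra.
      apply: mulr_ge0; last by lra.
      apply: mulr_ge0; lra.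
    by rewrite pmulr_rgt0.
  have hd : 0 < 1 - tau ^+ 2 by nra.
  set D := M ^+ 2 + 2 * tau * M + 1.
  set S := Num.sqrt D.
  have hS : 0 <= S by apply: sqrtr_ge0.
  have hS2 : S ^+ 2 = D by rewrite sqr_sqrtr // /D; nra.
  set P2 := 4 * tau ^+ 2 + 2 * M * tau - 1 in hP.
  set G2 := M + 4 * tau - 4 * M * tau ^+ 2 - 8 * tau ^+ 3 in hG.
  have A1 : 2 * (1 - tau ^+ 2) - 1 - tau * M < tau * S.
    apply: (@lt_from _ _ _ (P2 * (1 - tau ^+ 2))).
    - by apply: mulr_ge0; lra.
    - by rewrite [(tau * S) ^+ 2]exprMn hS2 /D /P2; ring.
    - by apply: mulr_gt0.
  have A2 : tau * S < tau * G2 + P2.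
    apply: (@lt_from _ _ _ (P2 * (1 - tau ^+ 2) * (P2 + 2 * tau * G2))).
    - by nra.
    - by rewrite [(tau * S) ^+ 2]exprMn hS2 /D /P2 /G2; ring.
    - by apply: mulr_gt0 => //; [apply: mulr_gt0 => // | nra].
  have A3 : tau * G2 + P2 < S.
    apply: (@lt_from _ _ _ (G2 ^+ 2 * (1 - tau ^+ 2))) => //.
    - by rewrite hS2 /D /P2 /G2; ring.
    - by apply: mulr_gt0 => //; nra.
  have A4 : tau * S < (M + 3 * tau - 2 * M * tau ^+ 2 - 4 * tau ^+ 3).
    apply: (@lt_from _ _ _ (G2 * (1 - tau ^+ 2) * (M + 2 * tau))).
    - by move: hG hMt; rewrite /G2; lra.
    - by rewrite [(tau * S) ^+ 2]exprMn hS2 /D /P2 /G2; ring.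
    - by apply: mulr_gt0 => //; [apply: mulr_gt0 => // | lra].
  have A5 : (M + 3 * tau - 2 * M * tau ^+ 2 - 4 * tau ^+ 3) < S.
    apply: (@lt_from _ _ _ (P2 ^+ 2 * (1 - tau ^+ 2))) => //.
    - by rewrite hS2 /D /P2 /G2; ring.
    - by apply: mulr_gt0 => //; nra.
  have B5 : 4 * M + 8 * tau < 2 / (1 - tau ^+ 2) * (M + tau + S).
    rewrite ltdivl //; move: A5; lra.
  have B3 : 8 * tau * (M + 2 * tau) < 2 / (1 - tau ^+ 2) * (1 + tau * M + S).
    rewrite ltdivl //; move: A3; rewrite /G2 /P2; lra.
  split.
  + split; first by apply/andP; split; [nra | exact: ltW].
    rewrite (@sqrt_id _ (2 * P2)); last by rewrite /P2; ring.
      by rewrite /P2; ring.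
    lra.
  + split; first by apply/andP; split; [nra | exact: ltW].
    rewrite (@sqrt_id _ (2 * G2)); last by rewrite /G2; ring.
      by rewrite /G2; ring.
    lra.
  + apply/andP; split.
      by rewrite ltdivl //; move: A1; lra.
    by rewrite ltdivr //; move: A2; rewrite /G2 /P2; lra.
  + exact: B3.
  + apply/andP; split => //.
    by rewrite ltdivr //; move: A4; lra.
Qed.
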